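(* Let $b\in\{0,1\}^d$ and let $q$ be the effective gradient associated with $b$. Then $H_{b'}(q)\ge 0$ (equivalently $N_{b'}(q)\le 1$) for every bitmap $b'\ge b$.
   Context: Jackson network with a tree topology on nodes $\{1,\dots,d\}$, root node $1$; $i\to j$ means node $j$ is a child of node $i$. Customers arrive from outside only at node $1$, with rate $\lambda>0$. For $i\to j$, $\mu_{i,j}>0$ is the rate at which node $i$ serves customers and sends them to node $j$; $\mu_{i,0}\ge 0$ is the rate at which node $i$ serves customers who then leave the system. Let $\mu_i=\sum_{k:i\to k}\mu_{i,k}+\mu_{i,0}>0$. Arrival rates: $\Lambda_1=\lambda$ and $\Lambda_j=\Lambda_i\mu_{i,j}/\mu_i$ if $i\to j$. Utilities $\rho_i=\Lambda_i/\mu_i$, assumed to satisfy $\max_i\rho_i<1$; also $\lambda+\sum_i\mu_i=1$. Let $\mu'_{i,0}=\Lambda_i\mu_{i,0}/\mu_i$. A bitmap $b\in\{0,1\}^d$ encodes which nodes are nonempty ($b(i)=1$) or empty ($b(i)=0$); $b'\ge b$ means $b'(i)\ge b(i)$ for all $i$. For a bitmap $b$ and $q\in\mathbb{R}^d$: $N_b(q)=\lambda e^{-q(1)/2}+\sum_{i:b(i)=1}\sum_{j:i\to j}\mu_{i,j}e^{(q(i)-q(j))/2}+\sum_{i:b(i)=1}\mu_{i,0}e^{q(i)/2}+\sum_{i:b(i)=0}\mu_i$, and $H_b(q)=-2\log N_b(q)$. Effective rates (recursively from the leaves): $M_i(b)=\mu_i$ if $b(i)=1$, and $M_i(b)=\min\big(\mu_i,\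 \sum_{k:i\to k}M_k(b)+\mu'_{i,0}\big)$ if $b(i)=0$. The effective gradient of $b$ is $q$ with $q(i)=2\log(\Lambda_i/M_i(b))$. *)

(* Defs.v *)
From Stdlib Require Import Reals Lra Arith.
Open Scope R_scope.

(* Nodes are the naturals 1..d; node 1 is the root.  The tree is given by a
   parent function [par] : for 2 <= j <= d, [par j] is the unique i with i -> j.
   Rates: [mu i j] = mu_{i,j} for an edge i -> j, and [mu i 0] = mu_{i,0}
   (index 0 is the "outside", not a node). *)

Fixpoint sumR (f : nat -> R) (n : nat) : R :=
  match n with
  | O => 0
  | S m => sumR f m + f (S m)
  end.

Definition is_child (par : nat -> nat) (i k : nat) : bool :=
  (2 <=? k)%nat && Nat.eqb (par k) i.

Definition mutot (d : nat) (par : nat -> nat) (mu : nat -> nat -> R) (i : nat) : R :=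
  sumR (fun k => if is_child par i k then mu i k else 0) d + mu i 0%nat.

(* Lambda_j computed from the root, with fuel (path to root has < d edges) *)
Fixpoint Lam_fuel (fuel : nat) (d : nat) (par : nat -> nat) (lam : R)
    (mu : nat -> nat -> R) (j : nat) : R :=
  if Nat.eqb j 1 then lam else
  match fuel with
  | O => 0
  | S n => Lam_fuel n d par lam mu (par j) * mu (par j) j / mutot d par mu (par j)
  end.

Definition Lam d par lam mu (j : nat) : R := Lam_fuel d d par lam mu j.

Definition rho d par lam mu (i : nat) : R := Lam d par lam mu i / mutot d par mu i.

Definition mu'0 d par lam mu (i : nat) : R :=
  Lam d par lam mu i * mu i 0%nat / mutot d par mu i.

(* effective rates M_i(b), computed from the leaves, with fuel (height < d) *)
Fixpoint M_fuel (fuel : nat) (d : nat) (par : nat -> nat) (lam : R)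
    (mu : nat -> nat -> R) (b : nat -> bool) (i : nat) : R :=
  if b i then mutot d par mu i else
  match fuel with
  | O => mutot d par mu i
  | S n => Rmin (mutot d par mu i)
             (sumR (fun k => if is_child par i k then M_fuel n d par lam mu b k else 0) d
              + mu'0 d par lam mu i)
  end.

Definition Meff d par lam mu b (i : nat) : R := M_fuel d d par lam mu b i.

Definition eff_grad d par lam mu b (i : nat) : R :=
  2 * ln (Lam d par lam mu i / Meff d par lam mu b i).

Definition Nb d par lam (mu : nat -> nat -> R) (b : nat -> bool) (q : nat -> R) : R :=
  lam * exp (- q 1%nat / 2)
  + sumR (fun i => if b i then
            sumR (fun j => if is_child par i j then mu i j * exp ((q i - q j) / 2) else 0) d
          else 0) d
  + sumR (fun i => if b i then mu i 0%nat * exp (q i / 2) else 0) d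
  + sumR (fun i => if b i then 0 else mutot d par mu i) d.

Definition Hb d par lam mu b q : R := -2 * ln (Nb d par lam mu b q).

(* Main.v *)
Require Import Defs.
From Stdlib Require Import Reals Arith Lra Lia List Classical.
Open Scope R_scope.

Lemma sumR_ext f g n : (forall k, (1 <= k <= n)%nat -> f k = g k) -> sumR f n = sumR g n.
Proof. induction n; simpl; intros H; [reflexivity|]. rewrite IHn by (intros; apply H; lia). rewrite H by lia. reflexivity. Qed.

Lemma sumR_plus f g n : sumR (fun k => f k + g k) n = sumR f n + sumR g n.
Proof. induction n; simpl; [lra|]. rewrite IHn; lra. Qed.

Lemma sumR_minus f g n : sumR (fun k => f k - g k) n = sumR f n - sumR g n.
Proof. induction n; simpl; [lra|]. rewrite IHn; lra. Qed.

Lemma sumR_scal c f n : sumR (fun k => c * f k) n = c * sumR f n.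
Proof. induction n; simpl; [lra|]. rewrite IHn; lra. Qed.

Lemma sumR_0 n : sumR (fun _ => 0) n = 0.
Proof. induction n; simpl; [lra|]. rewrite IHn; lra. Qed.

Lemma sumR_le f g n : (forall k, (1 <= k <= n)%nat -> f k <= g k) -> sumR f n <= sumR g n.
Proof. induction n; simpl; intros H; [lra|].
  pose proof (IHn ltac:(intros; apply H; lia)). pose proof (H (S n) ltac:(lia)). lra. Qed.

Lemma sumR_swap (g : nat -> nat -> R) m n :
  sumR (fun i => sumR (g i) m) n = sumR (fun k => sumR (fun i => g i k) n) m.
Proof. induction n; simpl.
 - rewrite sumR_0. reflexivity.
 - rewrite IHn. rewrite <- sumR_plus. reflexivity. Qed.

Lemma sumR_ind p c n : (1 <= p <= n)%nat -> sumR (fun i => if Nat.eqb p i then c else 0) n = c.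
Proof. induction n; simpl; intros H; [lia|].
 destruct (Nat.eq_dec p (S n)).
 - subst. rewrite Nat.eqb_refl. rewrite (sumR_ext _ (fun _ => 0)). rewrite sumR_0; lra.
   intros k Hk. destruct (Nat.eqb_spec (S n) k); [lia|reflexivity].
 - rewrite IHn by lia. destruct (Nat.eqb_spec p (S n)); [lia|lra]. Qed.

Lemma sum_first f n : sumR f (S n) = f 1%nat + sumR (fun k => if (2 <=? k)%nat then f k else 0) (S n).
Proof. induction n.
 - simpl. lra.
 - change (sumR f (S (S n))) with (sumR f (S n) + f (S (S n))). rewrite IHn.
   change (sumR (fun k => if (2 <=? k)%nat then f k else 0) (S (S n))) with
     (sumR (fun k => if (2 <=? k)%nat then f k else 0) (S n) + (if (2 <=? S (S n))%nat then f (S (S n)) else 0)).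
   simpl (2 <=? S (S n))%nat. lra. Qed.

Lemma sum_children d par (f : nat -> R) :
  (forall j, (2 <= j <= d)%nat -> (1 <= par j <= d)%nat) ->
  sumR (fun i => sumR (fun k => if is_child par i k then f k else 0) d) d
  = sumR (fun k => if (2 <=? k)%nat then f k else 0) d.
Proof.
 intros Hp. rewrite sumR_swap. apply sumR_ext. intros k Hk.
 unfold is_child. destruct (2 <=? k)%nat eqn:E; simpl.
 - apply Nat.leb_le in E. apply sumR_ind. apply Hp; lia.
 - apply sumR_0.
Qed.

Lemma pigeon (f : nat -> nat) d :
  (forall t, (t <= d)%nat -> (1 <= f t <= d)%nat) ->
  exists a b, (a < b <= d)%nat /\ f a = f b.
Proof.
  intros H. apply NNPP. intro Hn.
  assert (ND : NoDup (map f (seq 0 (S d)))).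
  { apply NoDup_map_NoDup_ForallPairs; [|apply seq_NoDup].
    intros a b Ha Hb Hab. apply in_seq in Ha, Hb.
    destruct (lt_eq_lt_dec a b) as [[?|?]|?]; auto;
    exfalso; apply Hn; [exists a, b | exists b, a]; split; auto; lia. }
  assert (I : incl (map f (seq 0 (S d))) (seq 1 d)).
  { intros x Hx. apply in_map_iff in Hx. destruct Hx as [t [<- Ht]]. apply in_seq in Ht.
    apply in_seq. specialize (H t ltac:(lia)). lia. }
  pose proof (NoDup_incl_length ND I) as L. rewrite length_map, !length_seq in L. lia.
Qed.

Lemma iter_period (par : nat -> nat) k a b : (a < b)%nat -> Nat.iter a par k = Nat.iter b par k ->
  forall m, (a <= m)%nat -> exists r, (a <= r < b)%nat /\ Nat.iter m par k = Nat.iter r par k.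
Proof.
 intros Hab He m. induction m as [m IH] using lt_wf_ind. intros Hm.
 destruct (Nat.lt_ge_cases m b).
 - exists m; split; auto; lia.
 - destruct (IH (m - (b - a))%nat ltac:(lia) ltac:(lia)) as [r [Hr Hr']].
   exists r; split; auto. rewrite <- Hr'.
   replace m with ((m - b) + b)%nat by lia. replace (m - b + b - (b-a))%nat with ((m-b)+a)%nat by lia.
   rewrite !Nat.iter_add. rewrite He. reflexivity.
Qed.

Lemma iter_range d par k m :
  (forall j, (2 <= j <= d)%nat -> (1 <= par j <= d)%nat) -> (1 <= k <= d)%nat ->
  (forall t, (t < m)%nat -> Nat.iter t par k <> 1%nat) ->
  forall t, (t <= m)%nat -> (1 <= Nat.iter t par k <= d)%nat.
Proof.
  intros Hp Hk Hn t. induction t; intros Ht; simpl; [lia|].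
  apply Hp. specialize (IHt ltac:(lia)). specialize (Hn t ltac:(lia)). lia.
Qed.

Lemma depth_bound d par :
  (forall j, (2 <= j <= d)%nat -> (1 <= par j <= d)%nat) ->
  (forall j, (1 <= j <= d)%nat -> exists n, Nat.iter n par j = 1%nat) ->
  forall j, (1 <= j <= d)%nat -> exists m, (m < d)%nat /\ Nat.iter m par j = 1%nat.
Proof.
  intros Hp Hr j Hj. destruct (Hr j Hj) as [m0 Hm0]. revert Hm0.
  induction m0 as [m0 IH] using lt_wf_ind. intros Hm0.
  destruct (Nat.lt_ge_cases m0 d). { exists m0; auto. }
  destruct (classic (exists t, (t < m0)%nat /\ Nat.iter t par j = 1%nat)) as [[t [Ht1 Ht2]]|Hno].
  - apply (IH t Ht1 Ht2).
  - assert (Hn : forall t, (t < m0)%nat -> Nat.iter t par j <> 1%nat).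
    { intros t Ht E. apply Hno. exists t; auto. }
    pose proof (iter_range d par j m0 Hp Hj Hn) as R.
    destruct (pigeon (fun t => Nat.iter t par j) d ltac:(intros; apply R; lia)) as [a [b [Hab E]]].
    destruct (iter_period par j a b ltac:(lia) E m0 ltac:(lia)) as [r [Hr0 Er]].
    exfalso. apply (Hn r); [lia|]. rewrite <- Er. exact Hm0.
Qed.

Lemma sum_first' f n : (1 <= n)%nat -> sumR f n = f 1%nat + sumR (fun k => if (2 <=? k)%nat then f k else 0) n.
Proof. destruct n; [lia|]. intros _. apply sum_first. Qed.

Lemma Lam_fuel_S n d par lam mu j : Lam_fuel (S n) d par lam mu j =
  if Nat.eqb j 1 then lam else Lam_fuel n d par lam mu (par j) * mu (par j) j / mutot d par mu (par j).
Proof. reflexivity. Qed.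

Lemma M_fuel_S n d par lam mu b i : M_fuel (S n) d par lam mu b i =
  if b i then mutot d par mu i else
  Rmin (mutot d par mu i)
       (sumR (fun k => if is_child par i k then M_fuel n d par lam mu b k else 0) d
              + mu'0 d par lam mu i).
Proof. reflexivity. Qed.

Lemma Lam_stab d par lam mu : forall m j n n', Nat.iter m par j = 1%nat -> (m <= n)%nat -> (m <= n')%nat ->
  Lam_fuel n d par lam mu j = Lam_fuel n' d par lam mu j.
Proof.
 induction m; intros j n n' Hj Hn Hn'.
 - simpl in Hj. subst. destruct n, n'; reflexivity.
 - destruct n as [|n]; [lia|]; destruct n' as [|n']; [lia|]. rewrite !Lam_fuel_S.
   destruct (Nat.eqb j 1); [reflexivity|].
   rewrite (IHm (par j) n n'); auto with arith. rewrite <- Nat.iter_succ_r. exact Hj.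
Qed.

Definition anc (par : nat -> nat) h k i := Nat.iter h par k = i /\ (forall t, (t < h)%nat -> (2 <= Nat.iter t par k)%nat).

Lemma anc_step par h k' k i : anc par h k' k -> (2 <= k)%nat -> par k = i -> anc par (S h) k' i.
Proof.
  intros [A1 A2] Hk E. split.
  - rewrite Nat.iter_succ. rewrite A1. exact E.
  - intros t Ht. destruct (Nat.eq_dec t h). subst t. rewrite A1. lia. apply A2; lia.
Qed.

Lemma M_stab d par lam mu b : forall h i n n', (1 <= i <= d)%nat ->
  (forall k, (1 <= k <= d)%nat -> ~ anc par h k i) -> (h <= n)%nat -> (h <= n')%nat ->
  M_fuel n d par lam mu b i = M_fuel n' d par lam mu b i.
Proof.
 induction h; intros i n n' Hi Hna Hn Hn'.
 - exfalso. apply (Hna i Hi). split; [reflexivity| intros; lia].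
 - destruct n as [|n]; [lia|]; destruct n' as [|n']; [lia|]. rewrite !M_fuel_S.
   destruct (b i); [reflexivity|]. f_equal. f_equal. apply sumR_ext. intros k Hk.
   destruct (is_child par i k) eqn:Ec; [|reflexivity].
   unfold is_child in Ec. apply Bool.andb_true_iff in Ec. destruct Ec as [E1 E2].
   apply Nat.leb_le in E1. apply Nat.eqb_eq in E2.
   apply IHh; auto; try lia.
   intros k' Hk' A. apply (Hna k' Hk'). eapply anc_step; eauto.
Qed.

Lemma no_long d par :
  (forall j, (2 <= j <= d)%nat -> (1 <= par j <= d)%nat) ->
  (forall j, (1 <= j <= d)%nat -> exists n, Nat.iter n par j = 1%nat) ->
  forall k i, (1 <= k <= d)%nat -> ~ anc par d k i.
Proof.
  intros Hp Hr k i Hk [A1 A2]. destruct (depth_bound d par Hp Hr k Hk) as [m [Hm E]].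
  specialize (A2 m Hm). lia.
Qed.

Lemma Lam_rec d par lam mu :
  (forall j, (2 <= j <= d)%nat -> (1 <= par j <= d)%nat) ->
  (forall j, (1 <= j <= d)%nat -> exists n, Nat.iter n par j = 1%nat) ->
  forall j, (2 <= j <= d)%nat ->
  Lam d par lam mu j = Lam d par lam mu (par j) * mu (par j) j / mutot d par mu (par j).
Proof.
    intros Hpar Hroot j Hj. destruct (depth_bound d par Hpar Hroot j ltac:(lia)) as [m [Hm E]].
    destruct m as [|m]. { simpl in E. lia. }
    unfold Lam. destruct d as [|d']; [lia|].
    rewrite (Lam_fuel_S d' _ _ _ _ j). replace (Nat.eqb j 1) with false by (symmetry; apply Nat.eqb_neq; lia).
    rewrite (Lam_stab (S d') par lam mu m (par j) d' (S d')); auto with arith; try lia.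
    rewrite <- Nat.iter_succ_r. exact E.
Qed.

Lemma M_rec d par lam mu b :
  (forall j, (2 <= j <= d)%nat -> (1 <= par j <= d)%nat) ->
  (forall j, (1 <= j <= d)%nat -> exists n, Nat.iter n par j = 1%nat) ->
  forall i, (1 <= i <= d)%nat ->
  Meff d par lam mu b i = if b i then mutot d par mu i else
            Rmin (mutot d par mu i) (sumR (fun k => if is_child par i k then Meff d par lam mu b k else 0) d + mu'0 d par lam mu i).
Proof.
  intros Hpar Hroot i Hi. unfold Meff. destruct d as [|d']; [lia|].
    rewrite (M_fuel_S d' _ _ _ _ _ i). destruct (b i); [reflexivity|]. f_equal; f_equal.
    apply sumR_ext. intros k Hk. destruct (is_child par i k) eqn:Ec; [|reflexivity].
    unfold is_child in Ec. apply Bool.andb_true_iff in Ec. destruct Ec as [E1 E2].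
    apply Nat.leb_le in E1. apply Nat.eqb_eq in E2.
    apply (M_stab (S d') par lam mu b d'); auto; try lia.
    intros k' Hk' A. apply (no_long (S d') par Hpar Hroot k' i Hk'). eapply anc_step; eauto.
Qed.

Theorem mainTheorem3
  (d : nat) (par : nat -> nat) (lam : R) (mu : nat -> nat -> R)
  (Hd : (1 <= d)%nat)
  (Hpar : forall j, (2 <= j <= d)%nat -> (1 <= par j <= d)%nat)
  (Hroot : forall j, (1 <= j <= d)%nat -> exists n, Nat.iter n par j = 1%nat)
  (Hlam : 0 < lam)
  (Hedge : forall j, (2 <= j <= d)%nat -> 0 < mu (par j) j)
  (Hexit : forall i, (1 <= i <= d)%nat -> 0 <= mu i 0%nat)
  (Hmupos : forall i, (1 <= i <= d)%nat -> 0 < mutot d par mu i)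
  (Hrho : forall i, (1 <= i <= d)%nat -> rho d par lam mu i < 1)
  (Hnorm : lam + sumR (mutot d par mu) d = 1)
  (b : nat -> bool) :
  forall b' : nat -> bool,
    (forall i, (1 <= i <= d)%nat -> b i = true -> b' i = true) ->
    0 <= Hb d par lam mu b' (eff_grad d par lam mu b).
Proof.
  intros b' Hbb.
  assert (H1 : Lam d par lam mu 1%nat = lam) by (unfold Lam; case d; reflexivity).
  set (L := Lam d par lam mu) in *. set (M := Meff d par lam mu b). set (mt := mutot d par mu) in *.
  assert (Hchild : forall i k, is_child par i k = true -> (2 <= k)%nat /\ par k = i).
  { intros i k Ec. unfold is_child in Ec. apply Bool.andb_true_iff in Ec. destruct Ec as [E1 E2].
    apply Nat.leb_le in E1. apply Nat.eqb_eq in E2. auto. }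
  assert (Hrec : forall j, (2 <= j <= d)%nat -> L j = L (par j) * mu (par j) j / mt (par j)) by (apply Lam_rec; auto).
  assert (Hpos : forall j, (1 <= j <= d)%nat -> 0 < L j).
  { intros j Hj. destruct (Hroot j Hj) as [m E]. revert j Hj E. induction m; intros j Hj E.
    - simpl in E. subst j. rewrite H1. exact Hlam.
    - destruct (Nat.eq_dec j 1). { subst j. rewrite H1. exact Hlam. }
      rewrite Hrec by lia. apply Rdiv_lt_0_compat; [apply Rmult_lt_0_compat|].
      + apply IHm. apply Hpar; lia. rewrite <- Nat.iter_succ_r. exact E.
      + apply Hedge; lia.
      + apply Hmupos, Hpar; lia. }
  assert (HMrec : forall i, (1 <= i <= d)%nat -> M i = if b i then mt i else
            Rmin (mt i) (sumR (fun k => if is_child par i k then M k else 0) d + mu'0 d par lam mu i)) by (apply M_rec; auto).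
  assert (HLsplit : forall i, (1 <= i <= d)%nat ->
            L i = sumR (fun k => if is_child par i k then L k else 0) d + mu'0 d par lam mu i).
  { intros i Hi. rewrite (sumR_ext _ (fun k => L i / mt i * (if is_child par i k then mu i k else 0))).
    2:{ intros k Hk. destruct (is_child par i k) eqn:Ec; [|lra].
        destruct (Hchild i k Ec) as [E1 E2]. rewrite Hrec by lia. subst i. unfold Rdiv; ring. }
    rewrite sumR_scal. unfold mu'0. fold L. fold mt.
    set (X := sumR (fun k => if is_child par i k then mu i k else 0) d).
    assert (Hm : mt i = X + mu i 0%nat) by reflexivity.
    pose proof (Hmupos i Hi) as P. fold mt in P. rewrite Hm in *. field. lra. }
  assert (HLle : forall i, (1 <= i <= d)%nat -> L i <= mt i).
  { intros i Hi. pose proof (Hrho i Hi) as R. pose proof (Hmupos i Hi) as P. unfold rho in R. fold L mt in R, P.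
    assert (L i = L i / mt i * mt i) by (field; lra). nra. }
  assert (HMge : forall i, (1 <= i <= d)%nat -> L i <= M i).
  { assert (G : forall h i, (1 <= i <= d)%nat -> (forall k, (1 <= k <= d)%nat -> ~ anc par h k i) -> L i <= M i).
    { induction h; intros i Hi Hna.
      - exfalso. apply (Hna i Hi). split; [reflexivity| intros; lia].
      - rewrite HMrec by exact Hi. destruct (b i); [apply HLle; exact Hi|].
        apply Rmin_glb; [apply HLle; exact Hi|]. rewrite (HLsplit i Hi) at 1.
        apply Rplus_le_compat_r. apply sumR_le. intros k Hk.
        destruct (is_child par i k) eqn:Ec; [|lra]. destruct (Hchild i k Ec) as [E1 E2].
        apply IHh; [exact Hk|]. intros k' Hk' A. apply (Hna k' Hk'). eapply anc_step; eauto. }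
    intros i Hi. apply (G d i Hi). intros k Hk. apply no_long; auto. }
  assert (Hmu0sum : sumR (mu'0 d par lam mu) d = lam).
  { assert (E : sumR L d = sumR (fun i => sumR (fun k => if is_child par i k then L k else 0) d) d
                          + sumR (mu'0 d par lam mu) d).
    { rewrite <- sumR_plus. apply sumR_ext. intros; apply HLsplit; auto. }
    rewrite sum_children in E by exact Hpar. rewrite (sum_first' _ d Hd) in E. rewrite H1 in E. lra. }

  set (q := eff_grad d par lam mu b).
  assert (HMpos : forall i, (1 <= i <= d)%nat -> 0 < M i).
  { intros i Hi. pose proof (Hpos i Hi). pose proof (HMge i Hi). lra. }
  assert (E1 : forall i, (1 <= i <= d)%nat -> exp (q i / 2) = L i / M i).
  { intros i Hi. unfold q, eff_grad. fold L M.
    replace (2 * ln (L i / M i) / 2) with (ln (L i / M i)) by field.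
    apply exp_ln. apply Rdiv_lt_0_compat; auto. }
  assert (E0 : exp (- q 1%nat / 2) = M 1%nat / L 1%nat).
  { replace (- q 1%nat / 2) with (- (q 1%nat / 2)) by field. rewrite exp_Ropp, E1 by lia.
    pose proof (Hpos 1%nat ltac:(lia)). pose proof (HMpos 1%nat ltac:(lia)). field. lra. }
  assert (E2 : forall i j, (1 <= i <= d)%nat -> (1 <= j <= d)%nat -> is_child par i j = true ->
             mu i j * exp ((q i - q j) / 2) = mt i / M i * M j).
  { intros i j Hi Hj Ec. destruct (Hchild i j Ec) as [Ej1 Ej2].
    replace ((q i - q j) / 2) with (q i / 2 + - (q j / 2)) by field.
    rewrite exp_plus, exp_Ropp, !E1 by auto. rewrite (Hrec j) by lia. rewrite Ej2.
    pose proof (Hpos i Hi). pose proof (HMpos i Hi). pose proof (HMpos j Hj).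
    pose proof (Hmupos i Hi). pose proof (Hedge j ltac:(lia)) as P. rewrite Ej2 in P.
    field. repeat split; lra. }
  assert (HN : Nb d par lam mu b' q <= 1).
  { unfold Nb. rewrite E0, H1.
    assert (HA : sumR (fun i => if b' i then sumR (fun j => if is_child par i j then mu i j * exp ((q i - q j) / 2) else 0) d else 0) d
      = sumR (fun i => if b' i then mt i / M i * sumR (fun k => if is_child par i k then M k else 0) d else 0) d).
    { apply sumR_ext. intros i Hi. destruct (b' i); [|reflexivity].
      rewrite <- sumR_scal. apply sumR_ext. intros k Hk.
      destruct (is_child par i k) eqn:Ec; [|lra]. apply E2; auto. }
    assert (HB : sumR (fun i => if b' i then mu i 0%nat * exp (q i / 2) else 0) d
      = sumR (fun i => if b' i then mt i / M i * mu'0 d par lam mu i else 0) d).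
    { apply sumR_ext. intros i Hi. destruct (b' i); [|reflexivity].
      rewrite E1 by auto. unfold mu'0. fold L mt.
      pose proof (HMpos i Hi). pose proof (Hmupos i Hi). field. lra. }
    rewrite HA, HB.
    assert (Hnode : forall i, (1 <= i <= d)%nat ->
       (if b' i then mt i / M i * sumR (fun k => if is_child par i k then M k else 0) d else 0)
       + (if b' i then mt i / M i * mu'0 d par lam mu i else 0)
       + (if b' i then 0 else mt i)
       <= mt i + (sumR (fun k => if is_child par i k then M k else 0) d + mu'0 d par lam mu i) - M i).
    { intros i Hi. pose proof (HMrec i Hi) as HM. pose proof (HMpos i Hi) as MP. pose proof (Hmupos i Hi).
      set (X := sumR (fun k => if is_child par i k then M k else 0) d) in *.
      set (Y := mu'0 d par lam mu i) in *.
      destruct (b' i) eqn:Eb'.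
      - destruct (b i) eqn:Eb.
        + rewrite HM. assert (mt i / mt i = 1) as R by (field; lra). rewrite R. lra.
        + destruct (Rle_dec (mt i) (X + Y)) as [Hle|Hlt].
          * rewrite Rmin_left in HM by exact Hle. rewrite HM.
            assert (mt i / mt i = 1) as R by (field; lra). rewrite R. lra.
          * rewrite Rmin_right in HM by lra. rewrite HM in MP |- *.
            replace (mt i / (X + Y) * X + mt i / (X + Y) * Y + 0) with (mt i) by (field; lra). lra.
      - destruct (b i) eqn:Eb. { rewrite (Hbb i Hi Eb) in Eb'. discriminate. }
        pose proof (Rmin_r (mt i) (X + Y)). lra. }
    assert (Sum : sumR (fun i => if b' i then mt i / M i * sumR (fun k => if is_child par i k then M k else 0) d else 0) d
       + sumR (fun i => if b' i then mt i / M i * mu'0 d par lam mu i else 0) d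
       + sumR (fun i => if b' i then 0 else mt i) d
       <= sumR (fun i => mt i + (sumR (fun k => if is_child par i k then M k else 0) d + mu'0 d par lam mu i) - M i) d).
    { rewrite <- !sumR_plus. apply sumR_le. exact Hnode. }
    rewrite sumR_minus, !sumR_plus, sum_children in Sum by exact Hpar.
    rewrite (sum_first' M d Hd) in Sum. rewrite Hmu0sum in Sum.
    replace (lam * (M 1%nat / lam)) with (M 1%nat) by (field; lra). fold mt. lra. }
  unfold Hb. set (N := Nb d par lam mu b' q) in *.
  destruct (Rlt_dec 0 N) as [Np|Nn].
  - destruct (Rle_lt_or_eq_dec N 1 HN) as [Hl|He].
    + pose proof (ln_increasing N 1 Np Hl). rewrite ln_1 in H. lra.
    + rewrite He, ln_1. lra.
  - unfold ln. destruct (Rlt_dec 0 N); [contradiction|lra].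
Qed.
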